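(* If a non-failed Boolean CSP is limited and hyper-arc consistent, then it is closed under the applications of (each of) the rules of the proof system BOOL'.
   Context: A Boolean CSP is $\langle \mathcal C; x_1\in D_1,\dots,x_n\in D_n\rangle$ with $D_i\subseteq\{0,1\}$ and $\mathcal C$ a finite set of Boolean constraints, each of the forms $u=v$ ($\{(0,0),(1,1)\}$), $\neg u=v$ ($\{(0,1),(1,0)\}$), $u\wedge v=w$ ($\{(0,0,0),(0,1,0),(1,0,0),(1,1,1)\}$), $u\vee v=w$ ($\{(0,0,0),(0,1,1),(1,0,1),(1,1,1)\}$) on distinct variables; constraints are always understood as restricted to the current domains. $x=d$ means $x\in\{d\}$. A CSP is failed if some domain is empty. A constraint is solved if it equals the product of the domains of its variables; $\phi$ is a reformulation of $\psi$ if removing solved constraints from both yields the same CSP. A Boolean CSP is limited if it contains no constraint $x\wedge y=z$ whose variables have domains $x=1, y\in\{0,1\}, z\in\{0,1\}$ or $x\in\{0,1\}, y=1, z\in\{0,1\}$, and no constraint $x\vee y=z$ whose variables have domains $x=0, y\in\{0,1\}, z\in\{0,1\}$ or $x\in\{0,1\}, y=0, z\in\{0,1\}$. The proof system BOOL' consists of the rules (constraint, premise $\rightarrow$ conclusion; $x,y,z$ schematic): EQU1: $x=y$, $x=1\rightarrow y=1$; EQU2: $x=y$, $y=1\rightarrow x=1$; EQU3: $x=y$, $x=0\rightarrow y=0$; EQU4: $x=y$, $y=0\rightarrow x=0$; NOT1: $\neg x=y$, $x=1\rightarrow y=0$; NOT2: $\neg x=y$, $x=0\rightarrow y=1$; NOT3: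 $\neg x=y$, $y=1\rightarrow x=0$; NOT4: $\neg x=y$, $y=0\rightarrow x=1$; AND1': $x\wedge y=z$, $x=1\rightarrow$ constraint $y=z$; AND2': $x\wedge y=z$, $y=1\rightarrow$ constraint $x=z$; AND3': $x\wedge y=z$, $z=1\rightarrow x=1$; AND4: $x\wedge y=z$, $x=0\rightarrow z=0$; AND5: $x\wedge y=z$, $y=0\rightarrow z=0$; AND6': $x\wedge y=z$, $z=1\rightarrow y=1$; OR1: $x\vee y=z$, $x=1\rightarrow z=1$; OR2': $x\vee y=z$, $x=0\rightarrow$ constraint $y=z$; OR3': $x\vee y=z$, $y=0\rightarrow$ constraint $x=z$; OR4': $x\vee y=z$, $z=0\rightarrow x=0$; OR5: $x\vee y=z$, $y=1\rightarrow z=1$; OR6': $x\vee y=z$, $z=0\rightarrow y=0$. On CSPs: a rule with constraint $c$ and premise $X=s$ is applicable to a CSP containing (an instance of) $c$ in which each variable of $X$ has domain exactly $\{s_i\}$. If the conclusion is $Y=t$, the result removes $c$ and replaces the domain $D$ of each $y_j\in Y$ by $D\cap\{t_j\}$; if the conclusion is a constraint, the result replaces $c$ by that equality constraint (on the corresponding variables) and leaves domains unchanged. An application is relevant if its result is not a reformulation of the original CSP. A CSP is closed under the applications of a rule $R$ if $R$ cannot be applied or no application of it is relevant. A constraint is hyper-arc consistent if for every variable of it each value in its domain participates in a solution to the constraint (restricted to current domains); a CSP is hyper-arc consistent if every constraint of it is. *)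

(* Defs.v *)
From HB Require Import structures.
From mathcomp Require Import all_boot.
Set Implicit Arguments. Unset Strict Implicit. Unset Printing Implicit Defensive.

Section BoolCSP.
Variable n : nat.
(* Variables are x_1..x_n, represented by 'I_n; the value 0 is false, 1 is true. *)
Notation var := 'I_n.

(* Constraint forms: u = v, ~u = v, u /\ v = w, u \/ v = w. *)
Inductive constr :=
| CEq of var & var
| CNot of var & var
| CAnd of var & var & var
| COr of var & var & var.

Definition constr_enc (c : constr) :
  ((var * var) + (var * var)) + ((var * var * var) + (var * var * var)) :=
  match c with
  | CEq x y => inl (inl (x, y))
  | CNot x y => inl (inr (x, y))
  | CAnd x y z => inr (inl (x, y, z))
  | COr x y z => inr (inr (x, y, z))
  end.
Definition constr_dec (e : ((var * var) + (var * var)) + ((var * var * var) + (var * var * var))) : constr :=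
  match e with
  | inl (inl (x, y)) => CEq x y
  | inl (inr (x, y)) => CNot x y
  | inr (inl (x, y, z)) => CAnd x y z
  | inr (inr (x, y, z)) => COr x y z
  end.
Lemma constr_encK : cancel constr_enc constr_dec. Proof. by case. Qed.
HB.instance Definition _ := Finite.copy constr (can_type constr_encK).

Definition cvars (c : constr) : seq var :=
  match c with
  | CEq x y | CNot x y => [:: x; y]
  | CAnd x y z | COr x y z => [:: x; y; z]
  end.

Definition wf_constr (c : constr) : bool := uniq (cvars c).

Definition sat (c : constr) (a : {ffun var -> bool}) : bool :=
  match c with
  | CEq x y => a y == a x
  | CNot x y => a y == ~~ a x
  | CAnd x y z => a z == (a x && a y)
  | COr x y z => a z == (a x || a y)
  end.

(* A CSP < C ; x_1 \in D_1, ..., x_n \in D_n >, D_i \subseteq {0,1}. *)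
Record csp := CSP { dom : var -> {set bool}; cstr : {set constr} }.

Definition wf_csp (phi : csp) : Prop := forall c, c \in cstr phi -> wf_constr c.

Definition failed (phi : csp) : Prop := exists i, dom phi i = set0.

Definition in_doms (D : var -> {set bool}) (c : constr) (a : {ffun var -> bool}) : bool :=
  all (fun u => a u \in D u) (cvars c).

(* c is solved: its relation restricted to the domains is the product of the
   domains of its variables *)
Definition solved (D : var -> {set bool}) (c : constr) : bool :=
  [forall a : {ffun var -> bool}, in_doms D c a ==> sat c a].

Definition unsolved (phi : csp) : {set constr} :=
  [set c in cstr phi | ~~ solved (dom phi) c].

Definition reformulation (psi phi : csp) : Prop :=
  (forall i, dom psi i = dom phi i) /\ unsolved psi = unsolved phi.

Definition hac_constr (D : var -> {set bool}) (c : constr) : Prop :=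
  forall v, v \in cvars c -> forall d, d \in D v ->
    exists a : {ffun var -> bool}, [/\ a v = d, in_doms D c a & sat c a].
Definition hac (phi : csp) : Prop :=
  forall c, c \in cstr phi -> hac_constr (dom phi) c.

Definition limited (phi : csp) : Prop :=
  forall c, c \in cstr phi ->
  match c with
  | CAnd x y z =>
      ~ (dom phi x = [set true] /\ dom phi y = setT /\ dom phi z = setT) /\
      ~ (dom phi x = setT /\ dom phi y = [set true] /\ dom phi z = setT)
  | COr x y z =>
      ~ (dom phi x = [set false] /\ dom phi y = setT /\ dom phi z = setT) /\
      ~ (dom phi x = setT /\ dom phi y = [set false] /\ dom phi z = setT)
  | _ => True
  end.

Inductive rule :=
| EQU1 | EQU2 | EQU3 | EQU4
| NOT1 | NOT2 | NOT3 | NOT4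
| AND1' | AND2' | AND3' | AND4 | AND5 | AND6'
| OR1 | OR2' | OR3' | OR4' | OR5 | OR6'.

(* result of a rule whose conclusion is  y = t : remove c, D_y := D_y \cap {t} *)
Definition concl_dom (phi : csp) (c : constr) (y : var) (t : bool) : csp :=
  CSP (fun i => if i == y then dom phi i :&: [set t] else dom phi i)
      (cstr phi :\ c).

(* result of a rule whose conclusion is a constraint c' : replace c by c' *)
Definition concl_cstr (phi : csp) (c c' : constr) : csp :=
  CSP (dom phi) ((cstr phi :\ c) :|: [set c']).

(* premise x = s : the domain of x is exactly {s} *)
Definition prem (phi : csp) (x : var) (s : bool) : bool := dom phi x == [set s].

(* app r phi c = Some psi  iff  r (with its schematic variables instantiated by
   the variables of c, in order) has its premise satisfied in phi and psi is the
   result; the requirement that c belongs to phi is in [applies] below *)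
Definition app (r : rule) (phi : csp) (c : constr) : option csp :=
  match r, c with
  | EQU1, CEq x y => if prem phi x true then Some (concl_dom phi c y true) else None
  | EQU2, CEq x y => if prem phi y true then Some (concl_dom phi c x true) else None
  | EQU3, CEq x y => if prem phi x false then Some (concl_dom phi c y false) else None
  | EQU4, CEq x y => if prem phi y false then Some (concl_dom phi c x false) else None
  | NOT1, CNot x y => if prem phi x true then Some (concl_dom phi c y false) else None
  | NOT2, CNot x y => if prem phi x false then Some (concl_dom phi c y true) else None
  | NOT3, CNot x y => if prem phi y true then Some (concl_dom phi c x false) else None
  | NOT4, CNot x y => if prem phi y false then Some (concl_dom phi c x true) else None
  | AND1', CAnd x y z => if prem phi x true then Some (concl_cstr phi c (CEq y z)) else None
  | AND2', CAnd x y z => if prem phi y true then Some (concl_cstr phi c (CEq x z)) else None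
  | AND3', CAnd x y z => if prem phi z true then Some (concl_dom phi c x true) else None
  | AND4, CAnd x y z => if prem phi x false then Some (concl_dom phi c z false) else None
  | AND5, CAnd x y z => if prem phi y false then Some (concl_dom phi c z false) else None
  | AND6', CAnd x y z => if prem phi z true then Some (concl_dom phi c y true) else None
  | OR1, COr x y z => if prem phi x true then Some (concl_dom phi c z true) else None
  | OR2', COr x y z => if prem phi x false then Some (concl_cstr phi c (CEq y z)) else None
  | OR3', COr x y z => if prem phi y false then Some (concl_cstr phi c (CEq x z)) else None
  | OR4', COr x y z => if prem phi z false then Some (concl_dom phi c x false) else None
  | OR5, COr x y z => if prem phi y true then Some (concl_dom phi c z true) else None
  | OR6', COr x y z => if prem phi z false then Some (concl_dom phi c y false) else None
  | _, _ => None
  end.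

Definition applies (r : rule) (phi : csp) (c : constr) (psi : csp) : Prop :=
  c \in cstr phi /\ app r phi c = Some psi.

Definition relevant (phi psi : csp) : Prop := ~ reformulation psi phi.

Definition closed_under (r : rule) (phi : csp) : Prop :=
  forall c psi, applies r phi c psi -> ~ relevant phi psi.

End BoolCSP.

(* Main.v *)
Require Import Defs.
From mathcomp Require Import all_boot.
Set Implicit Arguments. Unset Strict Implicit.

Definition fa (P : bool -> bool) := P true && P false.
Definition ex (P : bool -> bool) := P true || P false.
Definition hac3 (f : bool -> bool -> bool) (Dx Dy Dz : {set bool}) :=
  [&& fa (fun bx => (bx \in Dx) ==> ex (fun by_ => ex (fun bz => [&& by_ \in Dy, bz \in Dz & bz == f bx by_]))),
      fa (fun by_ => (by_ \in Dy) ==> ex (fun bx => ex (fun bz => [&& bx \in Dx, bz \in Dz & bz == f bx by_])))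
    & fa (fun bz => (bz \in Dz) ==> ex (fun bx => ex (fun by_ => [&& bx \in Dx, by_ \in Dy & bz == f bx by_])))].
Definition sol3 f (Dx Dy Dz : {set bool}) := fa (fun bx => fa (fun by_ => fa (fun bz => [&& bx \in Dx, by_ \in Dy & bz \in Dz] ==> (bz == f bx by_)))).
Definition sol2 (g : bool -> bool) (Dx Dy : {set bool}) := fa (fun bx => fa (fun by_ => (bx \in Dx) && (by_ \in Dy) ==> (by_ == g bx))).
Definition one (S : {set bool}) t := (t \in S) && (~~ t \notin S).
Definition full (S : {set bool}) := (true \in S) && (false \in S).
Definition ne (S : {set bool}) := (true \in S) || (false \in S).

Definition hac2 (g : bool -> bool) (Dx Dy : {set bool}) :=
  fa (fun bx => (bx \in Dx) ==> ex (fun by_ => (by_ \in Dy) && (by_ == g bx))) &&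
  fa (fun by_ => (by_ \in Dy) ==> ex (fun bx => (bx \in Dx) && (by_ == g bx))).

Ltac crunch Dx Dy Dz :=
  rewrite /hac3 /hac2 /sol3 /sol2 /one /full /ne /fa /ex /=;
  case: (true \in Dx); case: (false \in Dx); case: (true \in Dy); case: (false \in Dy); case: (true \in Dz); case: (false \in Dz); by [].

Lemma and_facts Dx Dy Dz : hac3 andb Dx Dy Dz -> ne Dx -> ne Dy -> ne Dz ->
  ~~ [&& one Dx true, full Dy & full Dz] -> ~~ [&& full Dx, one Dy true & full Dz] ->
  [/\ one Dx true -> sol3 andb Dx Dy Dz && sol2 id Dy Dz,
      one Dy true -> sol3 andb Dx Dy Dz && sol2 id Dx Dz,
      one Dz true -> [&& one Dx true, one Dy true & sol3 andb Dx Dy Dz],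
      one Dx false -> one Dz false && sol3 andb Dx Dy Dz &
      one Dy false -> one Dz false && sol3 andb Dx Dy Dz].
Proof. crunch Dx Dy Dz. Qed.

Lemma or_facts Dx Dy Dz : hac3 orb Dx Dy Dz -> ne Dx -> ne Dy -> ne Dz ->
  ~~ [&& one Dx false, full Dy & full Dz] -> ~~ [&& full Dx, one Dy false & full Dz] ->
  [/\ one Dx false -> sol3 orb Dx Dy Dz && sol2 id Dy Dz,
      one Dy false -> sol3 orb Dx Dy Dz && sol2 id Dx Dz,
      one Dz false -> [&& one Dx false, one Dy false & sol3 orb Dx Dy Dz],
      one Dx true -> one Dz true && sol3 orb Dx Dy Dz &
      one Dy true -> one Dz true && sol3 orb Dx Dy Dz].
Proof. crunch Dx Dy Dz. Qed.

Lemma eq_facts Dx Dy : hac2 id Dx Dy -> ne Dx -> ne Dy ->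
  forall t, [/\ one Dx t -> one Dy t && sol2 id Dx Dy &
                one Dy t -> one Dx t && sol2 id Dx Dy].
Proof. move=> + + + t; case: t; crunch Dx Dy Dx. Qed.

Lemma not_facts Dx Dy : hac2 negb Dx Dy -> ne Dx -> ne Dy ->
  forall t, [/\ one Dx t -> one Dy (~~ t) && sol2 negb Dx Dy &
                one Dy t -> one Dx (~~ t) && sol2 negb Dx Dy].
Proof. move=> + + + t; case: t; crunch Dx Dy Dx. Qed.

Lemma faP (P : bool -> bool) : fa P -> forall b, P b. Proof. by case/andP=> ? ? []. Qed.
Lemma faI (P : bool -> bool) : (forall b, P b) -> fa P. Proof. by move=> H; rewrite /fa !H. Qed.
Lemma exI (P : bool -> bool) b : P b -> ex P. Proof. by rewrite /ex; case: b => ->; rewrite ?orbT. Qed.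

Section Bridge.
Variable n : nat.
Implicit Types (phi : csp n) (D : 'I_n -> {set bool}).

Lemma hac3_of D (f : bool -> bool -> bool) x y z c :
  (forall a : {ffun 'I_n -> bool}, sat c a = (a z == f (a x) (a y))) ->
  cvars c = [:: x; y; z] -> hac_constr D c -> hac3 f (D x) (D y) (D z).
Proof.
move=> Hs Hv H; rewrite /hac3; apply/and3P; split; apply: faI => b; apply/implyP => hb.
- have [a [ha hin hsat]] := H x ltac:(by rewrite Hv mem_head) b hb.
  move: hin; rewrite /in_doms Hv /= andbT => /and3P[h1 h2 h3].
  apply: (@exI _ (a y)); apply: (@exI _ (a z)); by rewrite h2 h3 -ha -Hs.
- have [a [ha hin hsat]] := H y ltac:(by rewrite Hv !inE eqxx orbT) b hb.
  move: hin; rewrite /in_doms Hv /= andbT => /and3P[h1 h2 h3].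
  apply: (@exI _ (a x)); apply: (@exI _ (a z)); by rewrite h1 h3 -ha -Hs.
- have [a [ha hin hsat]] := H z ltac:(by rewrite Hv !inE eqxx !orbT) b hb.
  move: hin; rewrite /in_doms Hv /= andbT => /and3P[h1 h2 h3].
  apply: (@exI _ (a x)); apply: (@exI _ (a y)); by rewrite h1 h2 -ha -Hs.
Qed.

Lemma hac2_of D (g : bool -> bool) x y c :
  (forall a : {ffun 'I_n -> bool}, sat c a = (a y == g (a x))) ->
  cvars c = [:: x; y] -> hac_constr D c -> hac2 g (D x) (D y).
Proof.
move=> Hs Hv H; rewrite /hac2; apply/andP; split; apply: faI => b; apply/implyP => hb.
- have [a [ha hin hsat]] := H x ltac:(by rewrite Hv mem_head) b hb.
  move: hin; rewrite /in_doms Hv /= andbT => /andP[h1 h2].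
  apply: (@exI _ (a y)); by rewrite h2 -ha -Hs.
- have [a [ha hin hsat]] := H y ltac:(by rewrite Hv !inE eqxx orbT) b hb.
  move: hin; rewrite /in_doms Hv /= andbT => /andP[h1 h2].
  apply: (@exI _ (a x)); by rewrite h1 -ha -Hs.
Qed.

Lemma solved3 D (f : bool -> bool -> bool) x y z c :
  (forall a : {ffun 'I_n -> bool}, sat c a = (a z == f (a x) (a y))) ->
  cvars c = [:: x; y; z] -> sol3 f (D x) (D y) (D z) -> solved D c.
Proof.
move=> Hs Hv H; apply/forallP => a; apply/implyP.
rewrite /in_doms Hv /= andbT Hs => hin.
by have := faP (faP (faP H (a x)) (a y)) (a z); rewrite hin.
Qed.

Lemma solved2 D (g : bool -> bool) x y c :
  (forall a : {ffun 'I_n -> bool}, sat c a = (a y == g (a x))) ->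
  cvars c = [:: x; y] -> sol2 g (D x) (D y) -> solved D c.
Proof.
move=> Hs Hv H; apply/forallP => a; apply/implyP.
rewrite /in_doms Hv /= andbT Hs => hin.
by have := faP (faP H (a x)) (a y); rewrite hin.
Qed.

Lemma ne_of phi i : ~ failed phi -> ne (dom phi i).
Proof.
move=> nf; rewrite /ne; apply/negPn/negP => /norP[h1 h2]; apply: nf; exists i.
by apply/setP => -[]; rewrite inE; apply/negbTE.
Qed.

Lemma one_eq (S : {set bool}) t : one S t -> S = [set t].
Proof. by case/andP=> h1 h2; apply/setP => b; rewrite inE; case: b t h1 h2 => -[] //= _ /negbTE. Qed.
Lemma eq_one (S : {set bool}) t : S = [set t] -> one S t.
Proof. by move=> ->; rewrite /one !inE; case: t. Qed.
Lemma full_eq (S : {set bool}) : full S -> S = setT.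
Proof. by case/andP=> h1 h2; apply/setP => -[]; rewrite inE. Qed.

Lemma solved_ext D D' c : (forall i, D i = D' i) -> solved D c = solved D' c.
Proof.
move=> H; apply: eq_forallb => a; congr (_ ==> _).
by rewrite /in_doms; apply: eq_all => u; rewrite H.
Qed.

Lemma L_dom phi c y t : c \in cstr phi -> solved (dom phi) c -> one (dom phi y) t ->
  reformulation (concl_dom phi c y t) phi.
Proof.
move=> cin hs /one_eq hy.
have hd : forall i, dom (concl_dom phi c y t) i = dom phi i.
  by move=> i /=; case: eqP => // ->; rewrite hy setIid.
split => //; apply/setP => d; rewrite !inE (solved_ext d hd) /=.
by have [->|_] := eqVneq d c; rewrite ?hs ?andbF.
Qed.

Lemma L_cstr phi c c' : solved (dom phi) c -> solved (dom phi) c' ->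
  reformulation (concl_cstr phi c c') phi.
Proof.
move=> hs hs'; split => //; apply/setP => d; rewrite !inE /=.
have [->|_] := eqVneq d c'; first by rewrite hs' !andbF.
by have [->|_] := eqVneq d c; rewrite ?hs ?andbF ?orbF.
Qed.

End Bridge.

Theorem theorem6 (n : nat) (phi : csp n) :
  wf_csp phi -> ~ failed phi -> limited phi -> hac phi ->
  forall r : rule, closed_under r phi.
Proof.
move=> _ nf lim hc r c psi [cin happ]; apply; move: happ.
have H := hc c cin; have L := lim c cin.
case: c cin H L => [x y|x y|x y z|x y z] cin H L.
- have := hac2_of (g := id) (x := x) (y := y) (c := CEq x y) (fun a => erefl) erefl H.
  move=> /eq_facts /(_ (ne_of x nf) (ne_of y nf)) F.
  have [F1 F2] := F true; have [F3 F4] := F false.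
  have S1 := solved2 (fun a => erefl) erefl (D := dom phi) (g := id) (c := CEq x y).
  case: r => //=; case: ifP => // /eqP /eq_one hp [<-].
  + by case/andP: (F1 hp) => h1 h2; apply: L_dom => //; apply: S1.
  + by case/andP: (F2 hp) => h1 h2; apply: L_dom => //; apply: S1.
  + by case/andP: (F3 hp) => h1 h2; apply: L_dom => //; apply: S1.
  + by case/andP: (F4 hp) => h1 h2; apply: L_dom => //; apply: S1.
- have := hac2_of (g := negb) (x := x) (y := y) (c := CNot x y) (fun a => erefl) erefl H.
  move=> /not_facts /(_ (ne_of x nf) (ne_of y nf)) F.
  have [F1 F2] := F true; have [F3 F4] := F false.
  have S1 := solved2 (fun a => erefl) erefl (D := dom phi) (g := negb) (c := CNot x y).
  case: r => //=; case: ifP => // /eqP /eq_one hp [<-].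
  + by case/andP: (F1 hp) => h1 h2; apply: L_dom => //; apply: S1.
  + by case/andP: (F3 hp) => h1 h2; apply: L_dom => //; apply: S1.
  + by case/andP: (F2 hp) => h1 h2; apply: L_dom => //; apply: S1.
  + by case/andP: (F4 hp) => h1 h2; apply: L_dom => //; apply: S1.
- have := hac3_of (f := andb) (x := x) (y := y) (z := z) (c := CAnd x y z) (fun a => erefl) erefl H.
  move=> /and_facts /(_ (ne_of x nf) (ne_of y nf) (ne_of z nf)).
  case: L => L1 L2.
  have N1 : ~~ [&& one (dom phi x) true, full (dom phi y) & full (dom phi z)].
    by apply/negP => /and3P[/one_eq h1 /full_eq h2 /full_eq h3]; apply: L1.
  have N2 : ~~ [&& full (dom phi x), one (dom phi y) true & full (dom phi z)].
    by apply/negP => /and3P[/full_eq h1 /one_eq h2 /full_eq h3]; apply: L2.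
  move=> /(_ N1 N2) [F1 F2 F3 F4 F5].
  have S3 := solved3 (fun a => erefl) erefl (D := dom phi) (f := andb) (c := CAnd x y z).
  case: r => //=; case: ifP => // /eqP /eq_one hp [<-].
  + case/andP: (F1 hp) => h1 h2; apply: L_cstr; first exact: S3.
    exact: (solved2 (g := id) (c := CEq y z) (fun a => erefl) erefl h2).
  + case/andP: (F2 hp) => h1 h2; apply: L_cstr; first exact: S3.
    exact: (solved2 (g := id) (c := CEq x z) (fun a => erefl) erefl h2).
  + by case/and3P: (F3 hp) => h1 h2 h3; apply: L_dom => //; apply: S3.
  + by case/andP: (F4 hp) => h1 h2; apply: L_dom => //; apply: S3.
  + by case/andP: (F5 hp) => h1 h2; apply: L_dom => //; apply: S3.
  + by case/and3P: (F3 hp) => h1 h2 h3; apply: L_dom => //; apply: S3.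
- have := hac3_of (f := orb) (x := x) (y := y) (z := z) (c := COr x y z) (fun a => erefl) erefl H.
  move=> /or_facts /(_ (ne_of x nf) (ne_of y nf) (ne_of z nf)).
  case: L => L1 L2.
  have N1 : ~~ [&& one (dom phi x) false, full (dom phi y) & full (dom phi z)].
    by apply/negP => /and3P[/one_eq h1 /full_eq h2 /full_eq h3]; apply: L1.
  have N2 : ~~ [&& full (dom phi x), one (dom phi y) false & full (dom phi z)].
    by apply/negP => /and3P[/full_eq h1 /one_eq h2 /full_eq h3]; apply: L2.
  move=> /(_ N1 N2) [F1 F2 F3 F4 F5].
  have S3 := solved3 (fun a => erefl) erefl (D := dom phi) (f := orb) (c := COr x y z).
  case: r => //=; case: ifP => // /eqP /eq_one hp [<-].
  + by case/andP: (F4 hp) => h1 h2; apply: L_dom => //; apply: S3.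
  + case/andP: (F1 hp) => h1 h2; apply: L_cstr; first exact: S3.
    exact: (solved2 (g := id) (c := CEq y z) (fun a => erefl) erefl h2).
  + case/andP: (F2 hp) => h1 h2; apply: L_cstr; first exact: S3.
    exact: (solved2 (g := id) (c := CEq x z) (fun a => erefl) erefl h2).
  + by case/and3P: (F3 hp) => h1 h2 h3; apply: L_dom => //; apply: S3.
  + by case/andP: (F5 hp) => h1 h2; apply: L_dom => //; apply: S3.
  + by case/and3P: (F3 hp) => h1 h2 h3; apply: L_dom => //; apply: S3.
Qed.
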